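(* Let $\Gamma$ be a layered graph, $n\ge2$, and let $a=\sum_{v\in V_n}\alpha_v v$ be a nonzero element of $B_n$. Then $\kappa_a=\bigcap_{v\in V_n:\,\alpha_v\neq0}\kappa_v$.
   Context: A layered graph is a finite directed graph $\Gamma=(V,E)$ with $V=\bigsqcup_{i=0}^{N}V_i$ such that every edge from $V_i$ goes to $V_{i-1}$; $|v|=i$ for $v\in V_i$, $V_+=\bigsqcup_{i\ge1}V_i$, $V_{\ge k}=\bigsqcup_{i\ge k}V_i$, $S(v)=\{w:(v,w)\in E\}$, nonempty for $v\in V_+$. Over a field $\mathbb F$, $B(\Gamma)=T(V_+)/R_B$, where $T(V_+)$ is the free algebra and $R_B$ is the two-sided ideal generated by $\{vw: v,w\in V_+,(v,w)\notin E\}\cup\{v\sum_{w\in S(v)}w: v\in V_{\ge2}\}$. It is doubly graded, $B(\Gamma)_{m,n}$ being spanned by images of $v_1\cdots v_m$ with $\sum|v_i|=n$. $B_n=B(\Gamma)_{1,n}$ is the span of $V_n$, in which $V_n$ is a basis. For $a\in B_n$ ($n\ge2$), $\kappa_a$ is the kernel of the linear map $B_{n-1}\to B(\Gamma)$, $b\mapsto ab$. *)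

(* Defs.v *)
From HB Require Import structures.
From mathcomp Require Import all_boot all_order all_algebra.
Set Implicit Arguments. Unset Strict Implicit. Unset Printing Implicit Defensive.
Import GRing.Theory.
Local Open Scope ring_scope.

Definition layered_graph (V : finType) (lvl : V -> nat) (E : rel V) : Prop :=
  (forall v w, E v w -> lvl v = (lvl w).+1) /\
  (forall v, (0 < lvl v)%N -> exists w, E v w).

(* Elements of the free algebra T(V_+) are represented as formal finite
   linear combinations of words: lists of (coefficient, word) pairs. *)
Definition fa (V : finType) (F : fieldType) := seq (F * seq V).

(* The coefficient of the word w in p. Two formal combinations denote the
   same element of T(V_+) iff all their coefficients agree. *)
Definition fcoef (V : finType) (F : fieldType) (p : fa V F) (w : seq V) : F :=
  \sum_(t <- p | t.2 == w) t.1.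

(* Generators of R_B, indexed by (v, Some w) : the monomial v w, required
   (v,w) not an edge, v,w in V_+ ; and (v, None) : v * sum_{w in S(v)} w,
   required v in V_{>=2}. *)
Definition gen_valid (V : finType) (lvl : V -> nat) (E : rel V)
    (g : V * option V) : bool :=
  match g with
  | (v, Some w) => [&& (0 < lvl v)%N, (0 < lvl w)%N & ~~ E v w]
  | (v, None) => (2 <= lvl v)%N
  end.

Definition gen_elt (V : finType) (F : fieldType) (E : rel V)
    (g : V * option V) : fa V F :=
  match g with
  | (v, Some w) => [:: (1, [:: v; w])]
  | (v, None) => [seq (1, [:: v; w]) | w <- enum (E v)]
  end.

Definition ideal_term (V : finType) (F : fieldType) (E : rel V)
    (t : F * seq V * (V * option V) * seq V) : fa V F :=
  let: (c, x, g, y) := t in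
  [seq (c * u.1, x ++ u.2 ++ y) | u <- gen_elt F E g].

(* Membership in the two-sided ideal R_B of T(V_+): p is a finite linear
   combination of elements x g y with x, y words in V_+ and g a generator. *)
Definition in_RB (V : finType) (F : fieldType) (lvl : V -> nat) (E : rel V)
    (p : fa V F) : Prop :=
  exists l : seq (F * seq V * (V * option V) * seq V),
    (forall t, t \in l ->
       [&& gen_valid lvl E t.1.2, all (fun u => (0 < lvl u)%N) t.1.1.2
         & all (fun u => (0 < lvl u)%N) t.2]) /\
    (forall w, fcoef p w = fcoef (flatten [seq ideal_term E t | t <- l]) w).

(* An element of B_n = span(V_n), given by its coefficients in the basis V_n. *)
Definition in_Bn (V : finType) (F : fieldType) (lvl : V -> nat) (n : nat)
    (a : V -> F) : Prop :=
  forall v, a v != 0 -> lvl v = n.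

Definition mul_vec (V : finType) (F : fieldType) (a b : V -> F) : fa V F :=
  [seq (a v * b w, [:: v; w]) | v <- enum V, w <- enum V].

(* b in kappa_a : a b = 0 in B(Gamma), i.e. a b in R_B. (b is assumed in B_{n-1}.) *)
Definition in_kappa (V : finType) (F : fieldType) (lvl : V -> nat) (E : rel V)
    (a b : V -> F) : Prop :=
  in_RB lvl E (mul_vec a b).

Definition vtx (V : finType) (F : fieldType) (v : V) : V -> F :=
  fun u => (u == v)%:R.

(* Main.v *)
Require Import Defs.
From HB Require Import structures.
From mathcomp Require Import all_boot all_order all_algebra.
From mathcomp Require Import zify.
Import GRing.Theory.
Local Open Scope ring_scope.
Set Implicit Arguments. Unset Strict Implicit.

Section S.
Variables (F : fieldType) (V : finType) (lvl : V -> nat) (E : rel V).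

Lemma falseR : (false%:R : F) = 0. Proof. by []. Qed.

Lemma sumE (G : V -> F) : \sum_(y <- enum V) G y = \sum_(y : V) G y.
Proof. by rewrite big_enum. Qed.

Lemma sumEc (P : pred V) (G : V -> F) : \sum_(y <- enum V | P y) G y = \sum_(y : V | P y) G y.
Proof. by rewrite big_enum_cond. Qed.

Lemma fcoefE (p : fa V F) w : fcoef p w = \sum_(t <- p) (t.2 == w)%:R * t.1.
Proof. by rewrite /fcoef big_mkcond; apply: eq_bigr => t _; case: eqP; rewrite ?mul1r ?mul0r. Qed.

Lemma fcoef_flat (T : Type) (f : T -> fa V F) s w :
  fcoef (flatten [seq f i | i <- s]) w = \sum_(i <- s) fcoef (f i) w.
Proof. by rewrite /fcoef big_flatten big_map. Qed.

Lemma fcoef_cat (p q : fa V F) w : fcoef (p ++ q) w = fcoef p w + fcoef q w.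
Proof. by rewrite /fcoef big_cat. Qed.

Lemma fcoef_mul (a b : V -> F) w :
  fcoef (mul_vec a b) w = \sum_(x : V) \sum_(y : V) ([:: x; y] == w)%:R * (a x * b y).
Proof.
rewrite fcoefE /mul_vec big_allpairs_dep /= -big_enum /=.
by apply: eq_bigr => x _; rewrite -big_enum.
Qed.

Lemma word2E (x y : seq V) v w v0 u :
  (x ++ [:: v, w & y] == [:: v0; u]) = [&& x == [::], y == [::], v == v0 & w == u].
Proof.
case: x => [|c x]; case: y => [|d y] /=.
- by rewrite !eqseq_cons andbT.
- by rewrite !eqseq_cons; case: (v == v0); case: (w == u).
- apply/negbTE/negP => /eqP/(congr1 size); rewrite /= size_cat /=; lia.
- apply/negbTE/negP => /eqP/(congr1 size); rewrite /= size_cat /=; lia.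
Qed.


Lemma ideal_coef (t : F * seq V * (V * option V) * seq V) v0 u :
  (if t.1.2 is (v, Some w) then ~~ E v w else true) -> E v0 u ->
  fcoef (ideal_term E t) [:: v0; u] =
  [&& t.1.1.2 == [::], t.2 == [::] & t.1.2 == (v0, None)]%:R * t.1.1.1.
Proof.
case: t => [[[c x] g] y]; case: g => v [w|] /= Hw Hu.
- rewrite fcoefE /ideal_term /gen_elt /= big_seq1 /= word2E.
  have -> : [&& x == [::], y == [::], v == v0 & w == u] = false.
    apply/negbTE/negP; move/and4P=> [_ _ Hv Huw].
    by move: Hu; rewrite -(eqP Hv) -(eqP Huw) (negbTE Hw).
  have z : (false%:R : F) = 0 by [].
  have -> : ((v, Some w) == (v0, None)) = false by apply/negbTE/eqP; case.
  by rewrite z mul0r !andbF z mul0r.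
- rewrite fcoefE /ideal_term /gen_elt big_map big_map /=.
  under eq_bigr => w' _ do rewrite word2E.
  rewrite big_enum /=.
  have -> : ((v, None) == (v0, @None V)) = (v == v0) by rewrite xpair_eqE andbT.
  have [xy|nxy] := boolP ((x == [::]) && (y == [::]) && (v == v0)).
  - case/andP: xy => /andP[/eqP -> /eqP ->] /eqP ->; rewrite eqxx /=.
    rewrite (bigD1 u) //= eqxx big1 ?addr0 ?mul1r ?mulr1 //.
    by move=> w' /andP[_ /negbTE ->]; rewrite falseR mul0r.
  - rewrite big1; last by move=> j _; rewrite !andbA (negbTE nxy) falseR mul0r.
    by rewrite !andbA (negbTE nxy) falseR mul0r.
Qed.


Lemma fcoef_mul2 (a b : V -> F) x0 y0 :
  fcoef (mul_vec a b) [:: x0; y0] = a x0 * b y0.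
Proof.
rewrite fcoef_mul (bigD1 x0) //= [X in _ + X]big1 ?addr0.
  rewrite (bigD1 y0) //= [X in _ + X]big1 ?addr0 ?eqxx ?mul1r //.
  by move=> y /negbTE ny; rewrite !eqseq_cons ny /= andbF falseR mul0r.
move=> x /negbTE nx; apply: big1 => y _.
by rewrite !eqseq_cons nx /= falseR mul0r.
Qed.

Lemma valid_some g : gen_valid lvl E g -> (if g is (v, Some w) then ~~ E v w else true).
Proof. by case: g => v [w|] //= /and3P[]. Qed.

Lemma K1 (a b : V -> F) v0 : in_kappa lvl E a b -> a v0 != 0 ->
  forall u u', E v0 u -> E v0 u' -> b u = b u'.
Proof.
move=> [l [Hl Hc]] av0.
have key : forall u, E v0 u -> a v0 * b u =
   \sum_(t <- l) [&& t.1.1.2 == [::], t.2 == [::] & t.1.2 == (v0, None)]%:R * t.1.1.1.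
  move=> u Eu; rewrite -fcoef_mul2 Hc fcoef_flat big_seq [RHS]big_seq.
  apply: eq_bigr => t tl; apply: ideal_coef => //.
  by apply: valid_some; case/and3P: (Hl t tl).
move=> u u' Eu Eu'; apply: (mulfI av0); by rewrite !key.
Qed.


Lemma L1 (c : F) v w : fcoef (ideal_term E (c, [::], (v, None), [::])) w =
  \sum_(y : V) (E v y && ([:: v; y] == w))%:R * c.
Proof.
rewrite fcoefE /ideal_term /gen_elt big_map big_map /= big_enum /= big_mkcond /=.
apply: eq_bigr => y _; rewrite unfold_in; case: (E v y); rewrite /= ?mulr1 //.
by rewrite falseR mul0r.
Qed.

Lemma L2 (c : F) v y w : fcoef (ideal_term E (c, [::], (v, Some y), [::])) w =
  ([:: v; y] == w)%:R * c.
Proof. by rewrite fcoefE /ideal_term /gen_elt /= big_seq1 /= mulr1. Qed.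


Lemma K2 (a b : V -> F) :
  (forall v, a v != 0 -> (2 <= lvl v)%N) -> (forall u, b u != 0 -> (0 < lvl u)%N) ->
  (forall v, a v != 0 -> forall u u', E v u -> E v u' -> b u = b u') ->
  in_kappa lvl E a b.
Proof.
move=> Hla Hlb Hc.
pose Cv v := if [pick u | E v u] is Some u then b u else 0.
have HCv : forall v u, a v != 0 -> E v u -> Cv v = b u.
  move=> v u av Eu; rewrite /Cv; case: pickP => [u' Eu'|h]; first exact: (Hc v av).
  by rewrite h in Eu.
pose cond (p : V * V) := [&& a p.1 != 0, b p.2 != 0 & ~~ E p.1 p.2].
pose l1 := [seq (a v * Cv v, [::] : seq V, (v, @None V), [::] : seq V) | v <- [seq v <- enum V | a v != 0]].
pose l2 := [seq (a p.1 * b p.2, [::] : seq V, (p.1, Some p.2), [::] : seq V) |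
             p <- [seq p <- [seq (x, y) | x <- enum V, y <- enum V] | cond p]].
exists (l1 ++ l2); split.
  move=> t; rewrite mem_cat => /orP[] /mapP[p].
    by rewrite mem_filter => /andP[ap _] ->; rewrite /= Hla.
  rewrite mem_filter => /andP[/and3P[ap bp nE] _] ->.
  by rewrite /= nE (leq_trans _ (Hla _ ap)) // Hlb.
move=> w; rewrite fcoef_mul map_cat flatten_cat fcoef_cat !fcoef_flat /l1 /l2 !big_map !big_filter.
under eq_bigr do rewrite L1.
rewrite [X in _ + X](eq_bigr _ (fun i _ => L2 _ _ _ _)).
rewrite [X in _ + X]big_mkcond big_allpairs /=.
rewrite sumEc sumE.
under [X in _ + X]eq_bigr do rewrite sumE.
rewrite [in RHS]big_mkcond -big_split /=.
apply: eq_bigr => x _; case: ifP => ax.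
  rewrite -big_split /=; apply: eq_bigr => y _.
  rewrite /cond /= ax /=; case Exy: (E x y) => /=.
    by rewrite (HCv x y ax Exy) andbF addr0.
  rewrite falseR mul0r add0r andbT.
  by case: (b y =P 0) => [->|] /=; rewrite ?mulr0.
rewrite add0r; apply: eq_bigr => y _.
by rewrite /cond /= ax /=; move/negbFE/eqP: ax => ->; rewrite mul0r mulr0.
Qed.


Lemma vtx_nz (v u : V) : vtx F v u != 0 -> u = v.
Proof. move=> h; apply/eqP; apply: contraNT h => /negbTE huv; by rewrite /vtx huv. Qed.

Lemma vtx_self (v : V) : vtx F v v != 0.
Proof. by rewrite /vtx eqxx oner_neq0. Qed.

End S.

Unset Implicit Arguments.
Unset Strict Implicit.

Theorem mainTheorem8 (F : fieldType) (V : finType) (lvl : V -> nat) (E : rel V)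
  (HG : layered_graph lvl E) (n : nat) (Hn : (2 <= n)%N)
  (a : V -> F) (Ha : in_Bn lvl n a) (Ha0 : exists v, a v != 0)
  (b : V -> F) (Hb : in_Bn lvl n.-1 b) :
  in_kappa lvl E a b <->
  (forall v, a v != 0 -> in_kappa lvl E (vtx F v) b).
Proof.
have Hlb : forall u, b u != 0 -> (0 < lvl u)%N.
  by move=> u /Hb ->; rewrite -ltnS prednK // (leq_trans _ Hn).
split.
- move=> H v av; apply: K2 => //.
  + by move=> u /vtx_nz ->; rewrite Ha.
  + by move=> u /vtx_nz -> u1 u2; apply: (K1 H av).
- move=> H; apply: K2 => //.
  + by move=> v /Ha ->.
  + move=> v av; have := K1 (H v av); apply; exact: vtx_self.
Qed.
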